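(* Let $G$ be a graph of order $n\geq 3$ with no full vertex (i.e., no vertex of degree $n-1$). Then $\mathcal{C}_f(G)\geq 2\,d_f(G)$.
   Context: All graphs are finite and simple; $G=(V,E)$, $N(v)$ is the open neighborhood of $v$. A dominating set is $D\subseteq V$ such that every vertex of $V\setminus D$ has a neighbor in $D$. For an integer $k\geq 1$, a $k$-fair dominating set ($kFD$-set) is a dominating set $D$ such that $|N(v)\cap D|=k$ for every $v\in V\setminus D$. A fair dominating set (FD-set) is a $kFD$-set for some integer $k\geq 1$. A fair domatic partition of $G$ is a partition of $V$ into fair dominating sets; the fair domatic number $d_f(G)$ is the maximum number of parts of a fair domatic partition. A fair coalition consists of two disjoint sets $A_1,A_2\subseteq V$, neither of which is a fair dominating set, such that $A_1\cup A_2$ is a fair dominating set. A fair coalition partition ($fc$-partition) of $G$ is a partition $\Upsilon=\{A_1,\dots,A_k\}$ of $V$ such that every $A_i$ is either a singleton fair dominating set of $G$, or is not a fair dominating set and forms a fair coalition with some other non-fair-dominating set $A_j\in\Upsilon$. The fair coalition number $\mathcal{C}_f(G)$ is the maximum number of parts of an $fc$-partition of $G$. *)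

(* Defs.v *)
From mathcomp Require Import all_boot.
Set Implicit Arguments. Unset Strict Implicit. Unset Printing Implicit Defensive.

Definition simple_graph (T : finType) (e : rel T) : Prop :=
  symmetric e /\ irreflexive e.

Section FairDom.
Variables (T : finType) (e : rel T).

Definition nbhd (v : T) : {set T} := [set u | e v u].

Definition dominating (D : {set T}) : bool :=
  [forall v, (v \notin D) ==> [exists u in D, e v u]].

Definition kFD (k : nat) (D : {set T}) : bool :=
  dominating D && [forall v, (v \notin D) ==> (#|nbhd v :&: D| == k)].

(* fair dominating set: a kFD-set for some k >= 1.  The witness k can be taken
   <= |V| without loss (if D = V any k works, otherwise k = |N(v) ∩ D| <= |V|),
   so the existential ranges over 1 <= k <= |V|, making FD decidable. *)
Definition FD (D : {set T}) : bool :=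
  [exists k : 'I_#|T|.+1, (0 < k) && kFD k D].

Definition fair_domatic_partition (P : {set {set T}}) : bool :=
  partition P [set: T] && [forall A in P, FD A].

Definition fair_domatic_number : nat :=
  \max_(P : {set {set T}} | fair_domatic_partition P) #|P|.

Definition fair_coalition (A1 A2 : {set T}) : bool :=
  [&& [disjoint A1 & A2], ~~ FD A1, ~~ FD A2 & FD (A1 :|: A2)].

Definition fc_partition (P : {set {set T}}) : bool :=
  partition P [set: T] &&
  [forall A in P,
     ((#|A| == 1) && FD A) ||
     (~~ FD A && [exists B in P, (B != A) && fair_coalition A B])].

Definition fair_coalition_number : nat :=
  \max_(P : {set {set T}} | fc_partition P) #|P|.

End FairDom.

(* Main.v *)
Require Import Defs.
From mathcomp Require Import all_boot.
From mathcomp Require Import zify.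
Set Implicit Arguments. Unset Strict Implicit.

Lemma FD_single (T : finType) (e : rel T) :
  simple_graph e -> (forall v : T, #|nbhd e v| != #|T| - 1) ->
  forall x : T, ~~ FD e [set x].
Proof.
move=> [Hsym Hirr] Hn x.
apply/negP => /existsP [k /andP [_ /andP [Hdom _]]].
have H : nbhd e x = [set~ x].
  apply/setP=> v; rewrite !inE.
  case: (eqVneq v x) => [->|nvx] /=; first by rewrite Hirr.
  move/forallP: Hdom => /(_ v); rewrite inE nvx /= => /existsP [u /andP [/set1P -> evx]].
  by rewrite Hsym.
by move: (Hn x); rewrite H cardsC1 subn1 eqxx.
Qed.

Lemma FD_set0 (T : finType) (e : rel T) (x : T) : ~~ FD e set0.
Proof.
apply/negP => /existsP [k /andP [_ /andP [Hdom _]]].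
move/forallP: Hdom => /(_ x); rewrite inE /= => /existsP [u]; by rewrite inE.
Qed.

Definition Amax (T : finType) (e : rel T) (D : {set T}) : {set T} :=
  [arg max_(A > set0 | (A \proper D) && ~~ FD e A) #|A|].

Lemma Amax_spec (T : finType) (e : rel T) (D : {set T}) (x : T) :
  simple_graph e -> (forall v : T, #|nbhd e v| != #|T| - 1) ->
  FD e D ->
  [/\ Amax e D \proper D, ~~ FD e (Amax e D), Amax e D != set0 &
      forall y, y \in D :\: Amax e D -> FD e (Amax e D :|: [set y])].
Proof.
move=> Hs Hn HD.
have D0 : D != set0 by apply: contraTneq HD => ->; exact: FD_set0.
rewrite /Amax; case: arg_maxnP; first by rewrite proper0 D0 (FD_set0 e x).
move=> A /andP [pA nA] Hmax; split => //.
  have [y yD] := set0Pn _ D0.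
  have p1 : ([set y] \proper D).
    rewrite properEneq sub1set yD andbT.
    by apply: contraNneq (FD_single Hs Hn y) => ->.
  have := Hmax [set y]; rewrite p1 (FD_single Hs Hn y) cards1 => /(_ isT).
  by rewrite -card_gt0 card_gt0 => /card_gt0P [z zA]; apply/set0Pn; exists z.
move=> y /setDP [yD yA].
case: (eqVneq (A :|: [set y]) D) => [->//|neq].
apply: contraT => nF.
have : ((A :|: [set y]) \proper D) && ~~ FD e (A :|: [set y]).
  by rewrite properEneq neq nF subUset sub1set yD (proper_sub pA).
by move/Hmax; rewrite /= setUC cardsU1 yA add1n ltnn.
Qed.

Theorem theorem2p4 (T : finType) (e : rel T) :
  simple_graph e ->
  3 <= #|T| ->
  (forall v : T, #|nbhd e v| != #|T| - 1) ->
  2 * fair_domatic_number e <= fair_coalition_number e.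
Proof.
move=> Hs H3 Hn.
have [x0 _] : exists x0 : T, x0 \in [set: T] by apply/card_gt0P; rewrite cardsT; lia.
suff HP : forall P, fair_domatic_partition e P -> 2 * #|P| <= fair_coalition_number e.
  have : fair_domatic_number e <= fair_coalition_number e %/ 2.
    apply/bigmax_leqP => P /HP; lia.
  lia.
move=> P /andP [/and3P [/eqP Hcov Htriv H0P] /forall_inP HF].
pose A D := Amax e D.
pose yD D := odflt x0 [pick y in D :\: A D].
pose Sp D := A D |: [set [set y] | y in D :\: A D].
pose Q := \bigcup_(D in P) Sp D.
have HyD : forall D, D \in P -> yD D \in D :\: A D.
  move=> D HD; rewrite /yD; case: pickP => [y //|none].
  have [pA _ _ _] := Amax_spec x0 Hs Hn (HF D HD).
  have [_ [z zD zA]] := properP pA.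
  by move: (none z); rewrite inE zD zA.
have SpP : forall D B, B \in Sp D -> B = A D \/ exists2 y, y \in D :\: A D & B = [set y].
  move=> D B; rewrite in_setU1 => /orP [/eqP->|/imsetP [y Hy ->]]; [by left|right; by exists y].
have Sp_sub : forall D B, D \in P -> B \in Sp D -> B \subset D /\ B != set0.
  move=> D B HD /SpP [->|[y /setDP [yDD _] ->]].
    have [pA _ nz _] := Amax_spec x0 Hs Hn (HF D HD).
    by split => //; exact: proper_sub.
  by rewrite sub1set yDD; split => //; apply/set0Pn; exists y; rewrite inE.
have QP : forall B, B \in Q -> exists2 D, D \in P & B \in Sp D.
  by move=> B /bigcupP [D HD HB]; exists D.
have PQ : forall D B, D \in P -> B \in Sp D -> B \in Q.
  by move=> D B HD HB; apply/bigcupP; exists D.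
have inSpA : forall D, A D \in Sp D by move=> D; rewrite in_setU1 eqxx.
have inSp1 : forall D y, y \in D :\: A D -> [set y] \in Sp D.
  by move=> D y Hy; rewrite in_setU1; apply/orP; right; apply/imsetP; exists y.
pose f (p : {set T} * bool) := if p.2 then A p.1 else [set yD p.1].
have fQ : [set f p | p in setX P [set: bool]] \subset Q.
  apply/subsetP => B /imsetP [[D b] /setXP [HD _] ->]; rewrite /f /=.
  by case: b; [apply: (PQ D) => //; apply: inSpA | apply: (PQ D) => //; apply: inSp1; apply: HyD].
have fSp : forall p, p.1 \in P -> f p \in Sp p.1.
  by move=> [D [|]] /= HD; rewrite /f /=; [apply: inSpA | apply: inSp1; apply: HyD].
have finj : {in setX P [set: bool] &, injective f}.
  move=> [D1 b1] [D2 b2] /setXP [H1 _] /setXP [H2 _] Heq.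
  have [s1 n1] := Sp_sub _ _ H1 (fSp (D1, b1) H1).
  have [s2 n2] := Sp_sub _ _ H2 (fSp (D2, b2) H2).
  have eD : D1 = D2.
    apply/eqP; apply/negPn/negP => neq.
    have := trivIsetP Htriv D1 D2 H1 H2 neq.
    have [z zB] := set0Pn _ n1.
    move=> /disjointFr; move/(_ z).
    move/subsetP: s1 => /(_ z zB) ->.
    rewrite Heq in zB; move/subsetP: s2 => /(_ z zB) -> /(_ isT) //.
  subst D2.
  have := HyD D1 H1; rewrite inE => /andP [yA _].
  clear s1 s2 n1 n2; case: b1 b2 Heq => [] [] //=; rewrite /f /= => Heq.
    by move: yA; rewrite Heq in_set1 eqxx.
  by move: yA; rewrite -Heq in_set1 eqxx.
have HQcard : 2 * #|P| <= #|Q|.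
  apply: leq_trans (subset_leq_card fQ).
  by rewrite card_in_imset // cardsX cardsT card_bool mulnC.
apply: leq_trans HQcard _.
apply: (@leq_bigmax_cond _ _ (fun P0 : {set {set T}} => #|P0|) Q).
apply/andP; split.
  apply/and3P; split.
  - apply/eqP/setP => z; rewrite inE.
    have : z \in cover P by rewrite Hcov inE.
    move=> /bigcupP [D HD zD].
    apply/bigcupP.
    case zA : (z \in A D).
      by exists (A D) => //; apply: (PQ D) => //; apply: inSpA.
    exists [set z]; last by rewrite inE.
    by apply: (PQ D) => //; apply: inSp1; rewrite inE zA zD.
  - apply/trivIsetP => B1 B2 /QP [D1 H1 S1] /QP [D2 H2 S2] neq.
    have [s1 _] := Sp_sub _ _ H1 S1.
    have [s2 _] := Sp_sub _ _ H2 S2.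
    case: (eqVneq D1 D2) => [eD|nD]; last first.
      exact: disjointW s1 s2 (trivIsetP Htriv D1 D2 H1 H2 nD).
    subst D2.
    case: (SpP _ _ S1) => [E1|[y1 Hy1 E1]]; case: (SpP _ _ S2) => [E2|[y2 Hy2 E2]].
    + by move: neq; rewrite E1 E2 eqxx.
    + by rewrite E1 E2 disjoint_sym disjoints1; move: Hy2; rewrite inE => /andP [].
    + by rewrite E1 E2 disjoints1; move: Hy1; rewrite inE => /andP [].
    + rewrite E1 E2 disjoints1 in_set1; apply: contra neq => /eqP eq.
      by rewrite E1 E2 eq.
  - apply/negP => /QP [D HD HB].
    by have [_ /eqP] := Sp_sub _ _ HD HB.
apply/forall_inP => B HB; apply/orP; right.
have [D HD SB] := QP B HB.
have [pA nA _ HU] := Amax_spec x0 Hs Hn (HF D HD).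
case: (SpP _ _ SB) => [->|[y Hy ->]].
  rewrite nA /=; apply/existsP; exists [set yD D].
  have Hy := HyD D HD.
  rewrite (PQ D) ?inSp1 //=.
  have yA : yD D \notin A D by move: Hy; rewrite inE => /andP [].
  apply/andP; split.
    by apply: contra yA => /eqP <-; rewrite in_set1.
  by rewrite /fair_coalition disjoint_sym disjoints1 yA nA FD_single // HU.
rewrite FD_single //=; apply/existsP; exists (A D).
have yA : y \notin A D by move: Hy; rewrite inE => /andP [].
rewrite (PQ D) ?inSpA //=.
apply/andP; split.
  by apply: contra yA => /eqP ->; rewrite in_set1.
by rewrite /fair_coalition disjoints1 yA nA FD_single //= setUC HU.
Qed.
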